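(* Every Abel sequentially compact subset of $\mathbb{R}$ is slowly oscillating compact.
   Context: A sequence $(p_n)_{n\ge0}$ is Abel convergent to $\ell$ if $\sum_{k=0}^{\infty}p_k x^k$ converges for every $0\le x<1$ and $\lim_{x\to 1^-}(1-x)\sum_{k=0}^{\infty}p_k x^k=\ell$. A subset $F\subseteq\mathbb{R}$ is Abel sequentially compact if every sequence of points of $F$ has a subsequence Abel convergent to a limit belonging to $F$. A sequence $(p_n)$ is slowly oscillating if for every $\varepsilon>0$ there exist $\delta>0$ and $N$ such that $|p_m-p_n|<\varepsilon$ whenever $n\ge N$ and $n\le m\le(1+\delta)n$. A subset $E\subseteq\mathbb{R}$ is slowly oscillating compact if every sequence of points of $E$ has a slowly oscillating subsequence. *)

(* Defs.v *)
From Stdlib Require Import Reals.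
From Coquelicot Require Import Coquelicot.
Open Scope R_scope.

Definition abel_convergent (p : nat -> R) (l : R) : Prop :=
  (forall x : R, 0 <= x < 1 -> ex_series (fun k => p k * x ^ k)) /\
  filterlim (fun x : R => (1 - x) * Series (fun k => p k * x ^ k))
            (at_left 1) (locally l).

Definition strictly_increasing (phi : nat -> nat) : Prop :=
  forall n : nat, (phi n < phi (S n))%nat.

Definition abel_seq_compact (F : R -> Prop) : Prop :=
  forall p : nat -> R, (forall n, F (p n)) ->
    exists phi : nat -> nat, strictly_increasing phi /\
      exists l : R, F l /\ abel_convergent (fun n => p (phi n)) l.

Definition slowly_oscillating (p : nat -> R) : Prop :=
  forall eps : R, 0 < eps ->
    exists delta : R, 0 < delta /\ exists N : nat,
      forall n m : nat, (N <= n)%nat -> (n <= m)%nat ->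
        INR m <= (1 + delta) * INR n -> Rabs (p m - p n) < eps.

Definition slowly_oscillating_compact (E : R -> Prop) : Prop :=
  forall p : nat -> R, (forall n, E (p n)) ->
    exists phi : nat -> nat, strictly_increasing phi /\
      slowly_oscillating (fun n => p (phi n)).

(* Main.v *)
Require Import Defs.
From Stdlib Require Import Reals Lra Lia ZArith ClassicalEpsilon Classical ClassicalChoice.
From Coquelicot Require Import Coquelicot.
Open Scope R_scope.

Lemma nat_above (r : R) : exists n : nat, r < INR n.
Proof.
  destruct (archimed (Rabs r)) as [H1 _].
  assert (Hp : (0 < up (Rabs r))%Z).
  { apply lt_IZR. pose proof (Rabs_pos r). lra. }
  exists (Z.to_nat (up (Rabs r))).
  rewrite INR_IZR_INZ, Z2Nat.id by lia.
  pose proof (Rle_abs r). lra.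
Qed.

Lemma bernoulli (h : R) (n : nat) : 0 <= h <= 1 -> 1 - INR n * h <= (1 - h) ^ n.
Proof.
  intros Hh. induction n as [|n IH].
  - simpl. lra.
  - rewrite S_INR. simpl.
    pose proof (pos_INR n). nra.
Qed.

Lemma series_lower (q : nat -> R) (x : R) (M : nat) :
  (0 < M)%nat -> (forall k, INR k <= q k) -> 0 <= x < 1 ->
  ex_series (fun k => q k * x ^ k) ->
  INR M * x ^ M <= (1 - x) * Series (fun k => q k * x ^ k).
Proof.
  intros HM Hq Hx Hex.
  rewrite (Series_incr_n _ M HM Hex).
  assert (Hs : 0 <= sum_f_R0 (fun k => q k * x ^ k) (Init.Nat.pred M)).
  { apply cond_pos_sum. intros n. pose proof (Hq n). pose proof (pos_INR n).
    pose proof (pow_le x n ltac:(lra)). nra. }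
  assert (Ht : INR M * x ^ M * / (1 - x) <= Series (fun k => q (M + k)%nat * x ^ (M + k))).
  { rewrite <- Series_geom by (rewrite Rabs_pos_eq; lra).
    rewrite <- Series_scal_l.
    apply Series_le.
    - intros n. pose proof (pow_le x n ltac:(lra)). pose proof (pow_le x M ltac:(lra)).
      pose proof (pos_INR M). split. repeat apply Rmult_le_pos; lra.
      rewrite pow_add. pose proof (Hq (M+n)%nat).
      assert (INR M <= INR (M + n)) by (apply le_INR; lia).
      rewrite (Rmult_comm (x ^ M) (x ^ n)), <- Rmult_assoc, (Rmult_assoc (INR M)), (Rmult_comm (x ^ M)), <- Rmult_assoc.
      apply Rmult_le_compat_r. lra. apply Rmult_le_compat_r; lra.
    - apply (ex_series_incr_n (fun k => q k * x ^ k) M). exact Hex. }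
  assert (Hpos : 0 < 1 - x) by lra.
  assert (INR M * x ^ M = (1 - x) * (INR M * x ^ M * / (1 - x))) by (field; lra).
  nra.
Qed.

Lemma no_abel (q : nat -> R) (l : R) :
  (forall k, INR k <= q k) -> abel_convergent q l -> False.
Proof.
  intros Hq [Hex Hlim].
  pose proof (proj1 (@filterlim_locally R R_UniformSpace (at_left 1) (within_filter R (fun u => u < 1) (locally 1) (@filter_filter _ _ (locally_filter 1))) _ l) Hlim (mkposreal 1 Rlt_0_1)) as Hlim'.
  clear Hlim. rename Hlim' into Hlim.
  destruct Hlim as [d Hd].
  destruct (nat_above (2 * (Rabs l + 1))) as [M HM].
  assert (HM0 : (0 < M)%nat).
  { destruct M. simpl in HM. pose proof (Rabs_pos l). lra. lia. }
  pose proof (lt_0_INR _ HM0) as HMpos.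
  pose proof (cond_pos d) as dpos.
  set (h := Rmin (d / 2) (/ (2 * INR M))).
  assert (Hh1 : 0 < h).
  { unfold h. apply Rmin_glb_lt. lra. apply Rinv_0_lt_compat. lra. }
  assert (Hh2 : h <= d / 2) by apply Rmin_l.
  assert (Hh3 : h <= / (2 * INR M)) by apply Rmin_r.
  assert (HMh : INR M * h <= / 2).
  { replace (/ 2) with (INR M * / (2 * INR M)) by (field; lra).
    apply Rmult_le_compat_l; lra. }
  assert (Hh4 : h <= 1).
  { assert (1 <= INR M) by (apply (le_INR 1); lia). nra. }
  set (x := 1 - h).
  assert (Hx : 0 <= x < 1) by (unfold x; lra).
  assert (Hball : ball 1 d x).
  { unfold ball; simpl; unfold AbsRing_ball; simpl. unfold abs, minus, plus, opp; simpl.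
    rewrite Rabs_left1 by (unfold x; lra). unfold x. lra. }
  specialize (Hd x Hball (proj2 Hx)).
  unfold ball in Hd; simpl in Hd; unfold AbsRing_ball in Hd; simpl in Hd.
  unfold abs, minus, plus, opp in Hd; simpl in Hd.
  pose proof (series_lower q x M HM0 Hq Hx (Hex x Hx)) as Hlow.
  pose proof (bernoulli h M ltac:(lra)) as Hb.
  fold x in Hb.
  apply Rabs_lt_between in Hd.
  pose proof (Rle_abs l).
  assert (INR M * / 2 <= INR M * x ^ M).
  { apply Rmult_le_compat_l; lra. }
  lra.
Qed.

Lemma abel_opp (q : nat -> R) (l : R) :
  abel_convergent q l -> abel_convergent (fun k => - q k) (- l).
Proof.
  intros [Hex Hlim]. split.
  - intros x Hx. eapply ex_series_ext.
    2: apply (ex_series_opp _ (Hex x Hx)).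
    intros n. simpl. unfold opp; simpl. ring.
  - eapply filterlim_ext.
    2: exact (filterlim_comp _ _ _ _ opp _ _ _ Hlim (filterlim_opp l)).
    intros x. simpl. unfold opp; simpl.
    rewrite (Series_ext (fun k => - q k * x ^ k) (fun k => - (q k * x ^ k))) by (intros; ring).
    rewrite Series_opp. ring.
Qed.

Lemma phi_ge (phi : nat -> nat) : strictly_increasing phi -> forall k, (k <= phi k)%nat.
Proof.
  intros H k. induction k. lia. specialize (H k). lia.
Qed.

Lemma bounded_above (F : R -> Prop) : abel_seq_compact F ->
  exists U, forall x, F x -> x <= U.
Proof.
  intros HF. apply NNPP. intros Hn.
  assert (Hp : forall n : nat, exists x, F x /\ INR n <= x).
  { intros n. apply NNPP. intros Hc. apply Hn. exists (INR n). intros x Fx.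
    apply Rnot_lt_le. intros Hlt. apply Hc. exists x. split; auto. lra. }
  destruct (choice _ Hp) as [p Hpp].
  destruct (HF p (fun n => proj1 (Hpp n))) as [phi [Hphi [l [_ Hab]]]].
  apply (no_abel _ _ (fun k => Rle_trans _ _ _ (le_INR _ _ (phi_ge phi Hphi k)) (proj2 (Hpp (phi k)))) Hab).
Qed.

Lemma bounded_below (F : R -> Prop) : abel_seq_compact F ->
  exists L, forall x, F x -> L <= x.
Proof.
  intros HF. apply NNPP. intros Hn.
  assert (Hp : forall n : nat, exists x, F x /\ x <= - INR n).
  { intros n. apply NNPP. intros Hc. apply Hn. exists (- INR n). intros x Fx.
    apply Rnot_lt_le. intros Hlt. apply Hc. exists x. split; auto. lra. }
  destruct (choice _ Hp) as [p Hpp].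
  destruct (HF p (fun n => proj1 (Hpp n))) as [phi [Hphi [l [_ Hab]]]].
  apply (no_abel _ _ (fun k => Rle_trans _ _ _ (le_INR _ _ (phi_ge phi Hphi k))
     (ltac:(pose proof (proj2 (Hpp (phi k))); simpl; lra) : INR (phi k) <= - p (phi k)))
     (abel_opp _ _ Hab)).
Qed.

Theorem corollary17 (F : R -> Prop) :
  abel_seq_compact F -> slowly_oscillating_compact F.
Proof.
  intros HF p Hp.
  destruct (bounded_above F HF) as [U HU].
  destruct (bounded_below F HF) as [L HL].
  destruct (Bolzano_Weierstrass p (fun c => L <= c <= U) (compact_P3 L U)
     (fun n => conj (HL _ (Hp n)) (HU _ (Hp n)))) as [l Hl].
  assert (Hg : forall N k : nat, exists n, (N <= n)%nat /\ Rabs (p n - l) < / INR (S k)).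
  { intros N k.
    assert (Hpos : 0 < / INR (S k)) by (apply Rinv_0_lt_compat; apply lt_0_INR; lia).
    destruct (Hl (fun y => Rabs (y - l) < / INR (S k)) N) as [n [Hn Hv]].
    - exists (mkposreal _ Hpos). intros y Hy. exact Hy.
    - exists n. auto. }
  assert (Hg' : forall Nk : nat * nat, exists n, (fst Nk <= n)%nat /\ Rabs (p n - l) < / INR (S (snd Nk)))
    by (intros [N k]; apply Hg).
  destruct (choice _ Hg') as [g Hgg].
  set (phi := fix phi k := match k with O => g (O, O) | S k' => g (S (phi k'), S k') end).
  exists phi. split.
  - intros n. simpl. pose proof (proj1 (Hgg (S (phi n), S n))). simpl in H. lia.
  - assert (Hc : forall k, Rabs (p (phi k) - l) < / INR (S k)).
    { intros [|k]. apply (proj2 (Hgg (O, O))). apply (proj2 (Hgg (S (phi k), S k))). }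
    intros eps Heps. exists 1. split. lra.
    destruct (nat_above (2 / eps)) as [N HN].
    exists N. intros n m Hn Hm _.
    assert (Hb : forall k, (N <= k)%nat -> Rabs (p (phi k) - l) < eps / 2).
    { intros k Hk. eapply Rlt_le_trans. apply Hc.
      assert (HNk : INR N <= INR (S k)) by (apply le_INR; lia).
      assert (0 < INR N) by (pose proof (pos_INR N); assert (0 < 2/eps) by (unfold Rdiv; apply Rmult_lt_0_compat; [lra| apply Rinv_0_lt_compat; lra]); lra).
      apply Rle_trans with (/ INR N). apply Rinv_le_contravar; lra.
      replace (eps / 2) with (/ (2 / eps)) by (field; lra).
      apply Rinv_le_contravar. unfold Rdiv; apply Rmult_lt_0_compat; [lra| apply Rinv_0_lt_compat; lra]. lra. }
    pose proof (Hb m ltac:(lia)). pose proof (Hb n Hn).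
    replace (p (phi m) - p (phi n)) with ((p (phi m) - l) - (p (phi n) - l)) by ring.
    pose proof (Rabs_triang (p (phi m) - l) (- (p (phi n) - l))).
    rewrite Rabs_Ropp in H1. unfold Rminus at 1. lra.
Qed.
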